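(* Let $C_{t-1}\in\mathbb{R}^{d\times d}$ be symmetric positive semidefinite, $A_t\in\mathbb{R}^{d'\times d}$, and $Q_t\in\mathbb{R}^{d'\times d'}$ symmetric with $Q_t\succeq q_{\min}I$ for some $q_{\min}>0$. Let $P_t=A_tC_{t-1}A_t^\top+Q_t$ and let $P_{t-1}\in\mathbb{R}^{d\times d}$ be symmetric positive definite. Assume $A_t^\top A_t\preceq a_{\max}I$ and $P_{t-1}\preceq p_{\max}I$, and that $\gamma=\frac{a_{\max}p_{\max}}{q_{\min}}<1$. Then, with $M_t=P_t^{-1}$ and $M_{t-1}=P_{t-1}^{-1}$, $$A_t^\top M_tA_t\preceq\gamma M_{t-1}.$$
   Context: $\preceq$ denotes the Loewner order on symmetric matrices. This gives a sufficient condition for the contraction assumption $A_t^\top M_tA_t\preceq\gamma M_{t-1}$ with $\gamma\in[0,1)$ used in the tracking analysis of a recursive Gaussian discrepancy update whose pre-update covariance is propagated as $P_t=A_tC_{t-1}A_t^\top+Q_t$ (covariance inflation $Q_t$). *)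

(* Defs.v *)
From mathcomp Require Import all_boot all_order all_algebra.
Set Implicit Arguments. Unset Strict Implicit. Unset Printing Implicit Defensive.
Import Order.TTheory GRing.Theory Num.Theory.
Local Open Scope ring_scope.

Definition qform (R : numDomainType) (n : nat) (A : 'M[R]_n) (x : 'cV[R]_n) : R :=
  (x^T *m A *m x) 0 0.

Definition loewner_le (R : numDomainType) (n : nat) (A B : 'M[R]_n) : Prop :=
  forall x : 'cV[R]_n, qform A x <= qform B x.

Definition sym_mx (R : numDomainType) (n : nat) (A : 'M[R]_n) : Prop :=
  A^T = A.

Definition psd_mx (R : numDomainType) (n : nat) (A : 'M[R]_n) : Prop :=
  sym_mx A /\ loewner_le 0 A.

Definition pd_mx (R : numDomainType) (n : nat) (A : 'M[R]_n) : Prop :=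
  sym_mx A /\ forall x : 'cV[R]_n, x != 0 -> 0 < qform A x.

(* Main.v *)
Require Import Defs.
From mathcomp Require Import all_boot all_order all_algebra.
From mathcomp Require Import ring lra.
Import Order.TTheory GRing.Theory Num.Theory.
Local Open Scope ring_scope.
Set Implicit Arguments. Unset Strict Implicit.

Section H.
Variable R : realFieldType.
Variable n : nat.
Implicit Types (u v w : 'cV[R]_n) (M : 'M[R]_n).

Definition dot u v : R := (u^T *m v) 0 0.

Lemma dotC u v : dot u v = dot v u.
Proof. rewrite /dot; transitivity ((u^T *m v)^T 0 0); first by rewrite [RHS]mxE.
by rewrite trmx_mul trmxK. Qed.
Lemma dotDr u v w : dot u (v + w) = dot u v + dot u w.
Proof. by rewrite /dot mulmxDr mxE. Qed.
Lemma dotDl u v w : dot (v + w) u = dot v u + dot w u.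
Proof. by rewrite dotC dotDr !(dotC u). Qed.
Lemma dotZr c u v : dot u (c *: v) = c * dot u v.
Proof. by rewrite /dot -scalemxAr mxE. Qed.
Lemma dotZl c u v : dot (c *: v) u = c * dot v u.
Proof. by rewrite dotC dotZr dotC. Qed.
Lemma dotNr u v : dot u (- v) = - dot u v.
Proof. by rewrite -scaleN1r dotZr mulN1r. Qed.
Lemma dotNl u v : dot (- v) u = - dot v u.
Proof. by rewrite dotC dotNr dotC. Qed.
Lemma dot_ge0 u : 0 <= dot u u.
Proof.
rewrite /dot mxE; apply: sumr_ge0 => i _; rewrite mxE -expr2; exact: sqr_ge0.
Qed.
Lemma dot_gt0 u : u != 0 -> 0 < dot u u.
Proof.
move=> nz; rewrite lt_def dot_ge0 andbT; apply: contra nz => /eqP h.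
apply/eqP/matrixP => i j; rewrite (ord1 j) mxE.
move: h; rewrite /dot mxE => /eqP; rewrite psumr_eq0; last first.
  by move=> k _; rewrite mxE -expr2; exact: sqr_ge0.
move=> /allP /(_ i (mem_index_enum _)) /=; rewrite mxE mulf_eq0 orbb => /eqP //.
Qed.
Lemma qformE M u : qform M u = dot u (M *m u).
Proof. by rewrite /qform /dot mulmxA. Qed.
Lemma qform_scal c u : qform c%:M u = c * dot u u.
Proof. by rewrite qformE mul_scalar_mx dotZr. Qed.
Lemma dot_sym M u v : sym_mx M -> dot u (M *m v) = dot (M *m u) v.
Proof. by move=> s; rewrite /dot trmx_mul s mulmxA. Qed.

Lemma unit_of_inj M : (forall v : 'cV[R]_n, M *m v = 0 -> v = 0) -> M \in unitmx.
Proof.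
move=> H; rewrite -unitmx_tr -row_free_unit -kermx_eq0.
apply/eqP/row_matrixP => i; rewrite row0.
have h : row i (kermx M^T) *m M^T = 0 by apply/sub_kermxP; exact: row_sub.
apply: trmx_inj; rewrite trmx0; apply: H.
by rewrite -[M *m _]trmxK trmx_mul trmxK h trmx0.
Qed.
Lemma dot0r u : dot u 0 = 0.
Proof. by rewrite /dot mulmx0 mxE. Qed.

Lemma unit_of_pos M : (forall v, v != 0 -> 0 < qform M v) -> M \in unitmx.
Proof.
move=> H; apply: unit_of_inj => v Mv; apply/eqP; apply: contraT => nz.
by have := H v nz; rewrite qformE Mv dot0r ltxx.
Qed.

Lemma K1 M q : sym_mx M -> 0 < q -> (forall y, q * dot y y <= qform M y) ->
  M \in unitmx /\ forall y, q * qform (invmx M) y <= dot y y.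
Proof.
move=> s q0 H.
have U : M \in unitmx.
  apply: unit_of_pos => v nz; have := H v; have := dot_gt0 nz.
  move=> a b; apply: lt_le_trans b; exact: mulr_gt0.
split=> // y; set z := invmx M *m y.
have Pz : M *m z = y by rewrite /z mulKVmx.
have hz := H z; rewrite qformE Pz in hz.
have hn := dot_ge0 (y - q *: z).
rewrite !(dotDl, dotDr, dotNl, dotNr, dotZl, dotZr) in hn.
rewrite qformE -/z (dotC z y) in hz *.
rewrite (dotC z y) in hn.
nra.
Qed.

Lemma K2 M p : sym_mx M -> 0 < p -> psd_mx M -> (forall y, qform M y <= p * dot y y) ->
  M \in unitmx -> forall x, dot x x <= p * qform (invmx M) x.
Proof.
move=> s p0 [_ ps] H U x; set z := invmx M *m x.
have Pz : M *m z = x by rewrite /z mulKVmx.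
rewrite qformE -/z; clearbody z.
have hw := H x.
have hn := ps (p *: z - x).
rewrite [qform 0 _]/qform mulmx0 mul0mx mxE qformE in hn.
rewrite mulmxDr mulmxN -scalemxAr Pz in hn.
rewrite !(dotDl, dotDr, dotNl, dotNr, dotZl, dotZr) in hn.
rewrite qformE in hw.
have e : dot z (M *m x) = dot (M *m z) x by apply: dot_sym.
rewrite e Pz (dotC z x) in hn.
nra.
Qed.
End H.
Lemma qform_x0 (R : realFieldType) n (M : 'M[R]_n) : qform M 0 = 0.
Proof. by rewrite /qform trmx0 !mul0mx mxE. Qed.
Lemma qformZ (R : realFieldType) n (M : 'M[R]_n) c x : qform (c *: M) x = c * qform M x.
Proof. by rewrite /qform -scalemxAr -scalemxAl mxE. Qed.
Lemma qform_conj (R : realFieldType) m n (A : 'M[R]_(m, n)) (M : 'M[R]_m) x :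
  qform (A^T *m M *m A) x = qform M (A *m x).
Proof. by rewrite /qform trmx_mul !mulmxA. Qed.

Theorem proposition6 (R : realFieldType) (d d' : nat)
  (C : 'M[R]_d) (A : 'M[R]_(d', d)) (Q : 'M[R]_d') (Pprev : 'M[R]_d)
  (qmin amax pmax : R) :
  psd_mx C ->
  sym_mx Q ->
  0 < qmin ->
  loewner_le (qmin%:M) Q ->
  pd_mx Pprev ->
  loewner_le (A^T *m A) (amax%:M) ->
  loewner_le Pprev (pmax%:M) ->
  amax * pmax / qmin < 1 ->
  let P := A *m C *m A^T + Q in
  let gamma := amax * pmax / qmin in
  loewner_le (A^T *m invmx P *m A) (gamma *: invmx Pprev).
Proof.
move=> [sC psC] sQ q0 hQ [sPp pdPp] hA hPp _ P g x.
have [->|nz] := eqVneq x 0; first by rewrite !qform_x0.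
have sP : sym_mx P.
  rewrite /sym_mx /P linearD /= !trmx_mul trmxK sC sQ.
  by congr (_ + _); rewrite ?trmxK; exact: mulmxA.
have hP : forall y, qmin * dot y y <= qform P y.
  move=> y; rewrite qformE /P mulmxDl dotDr -!qformE.
  have := hQ y; rewrite qform_scal => h1.
  have h2 : 0 <= qform (A *m C *m A^T) y.
    rewrite -[A in A *m C]trmxK qform_conj.
    by have := psC (A^T *m y); rewrite [qform 0 _]/qform mulmx0 mul0mx mxE.
  lra.
have [UP hinv] := K1 sP q0 hP.
have hA' := hA x.
have eA : qform (A^T *m A) x = dot (A *m x) (A *m x) by rewrite /qform /dot trmx_mul !mulmxA.
rewrite qform_scal eA in hA'.
have a0 : 0 <= amax.
  have := dot_gt0 nz; have := dot_ge0 (A *m x); nra.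
have hpd := pdPp x nz.
have hPx := hPp x; rewrite qform_scal in hPx.
have p0 : 0 < pmax by have := dot_gt0 nz; nra.
have UPp : Pprev \in unitmx by apply: unit_of_pos.
have psPp : psd_mx Pprev.
  split=> // v; rewrite [qform 0 _]/qform mulmx0 mul0mx mxE.
  have [->|nzv] := eqVneq v 0; first by rewrite qform_x0.
  exact/ltW/pdPp.
have hPp' : forall y, qform Pprev y <= pmax * dot y y.
  by move=> y; have := hPp y; rewrite qform_scal.
have h2 := K2 sPp p0 psPp hPp' UPp x.
have h1 := hinv (A *m x).
rewrite qformZ qform_conj.
have gq : g * qmin = amax * pmax by rewrite /g divfK // gt_eqF.
set L := qform (invmx P) (A *m x) in h1 *.
set Rr := qform (invmx Pprev) x in h2 *.
set N := dot (A *m x) (A *m x) in h1 hA'.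
set D := dot x x in h2 hA' hpd hPx.
have : qmin * L <= qmin * (g * Rr).
  rewrite mulrA [qmin * g]mulrC gq.
  have : amax * D <= amax * (pmax * Rr) by apply: ler_wpM2l.
  lra.
by rewrite ler_pM2l.
Qed.
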